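(* Consider a one-step MDP ($T=1$) with a single state $\mathcal{S}=\{s_0\}$, action space equal to the goal space $\mathcal{A}=\mathcal{G}$ with $|\mathcal{A}|=|\mathcal{G}|=k$, and reward $r(s,a,g)=\mathbb{I}[a=g]$. Let the policy be $\pi(a\mid s_0,g)=\exp(L_{a,g})/\sum_{b\in\mathcal{A}}\exp(L_{b,g})$ with logits $L_{a,g}$, let the goal distribution be uniform, $p(g)=1/k$ for all $g\in\mathcal{G}$, and suppose the policy is at its initialization $L_{a,g}\equiv L$ for all $a,g$ (some constant $L$). For $a\in\mathcal{A},g\in\mathcal{G}$, let $\eta_{a,g}=r(s_0,b,g')\,\frac{\partial}{\partial L_{a,g}}\log\pi(b\mid s_0,g')$, where $g'\sim p(\cdot)$ and $b\sim\pi(\cdot\mid s_0,g')$, be the one-sample REINFORCE estimator of $\frac{\partial}{\partial L_{a,g}}J$, with $J=\mathbb{E}_{g\sim p}\mathbb{E}_{a\sim\pi(\cdot\mid s_0,g)}[r(s_0,a,g)]$. For a random variable $x$ define $\mathrm{MSE}[x]:=\mathbb{E}[(x-\mathbb{E}[\eta_{a,g}])^2]$. Then for every $a\in\mathcal{A}$ and $g\in\mathcal{G}$, as $k\to\infty$, $$\frac{\sqrt{\mathrm{MSE}[\eta_{a,g}]}}{\big|\mathbb{E}[\eta_{a,g}]\big|}=k\,(1+o(1)).$$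
   Context: $o(1)$ denotes a quantity tending to $0$ as $k\to\infty$. *)

(* Defs.v *)
From HB Require Import structures.
From mathcomp Require Import all_boot all_order all_algebra.
From mathcomp Require Import all_classical all_reals all_analysis.
Set Implicit Arguments. Unset Strict Implicit. Unset Printing Implicit Defensive.
Import Order.TTheory GRing.Theory Num.Theory.
Local Open Scope ring_scope.

(* One-step MDP with a single state s0 (left implicit), actions = goals = 'I_k.
   Logits L : 'I_k -> 'I_k -> R, indexed as L a g (action a, goal g). *)

Definition pol (R : realType) (k : nat) (L : 'I_k -> 'I_k -> R) (b g : 'I_k) : R :=
  expR (L b g) / \sum_(c < k) expR (L c g).

Definition rew (R : realType) (k : nat) (b g : 'I_k) : R := (b == g)%:R.

Definition goal_p (R : realType) (k : nat) (g : 'I_k) : R := (k%:R)^-1.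

Definition upd (R : realType) (k : nat) (L : 'I_k -> 'I_k -> R) (a g : 'I_k) (t : R) :
  'I_k -> 'I_k -> R :=
  fun b g' => if (b == a) && (g' == g) then t else L b g'.

Definition dlogpi (R : realType) (k : nat) (L : 'I_k -> 'I_k -> R) (a g b g' : 'I_k) : R :=
  derive1 (fun t : R => ln (pol (upd L a g t) b g')) (L a g).

(* one-sample REINFORCE estimator eta_{a,g}, as a function of the sample (g', b) *)
Definition reinforce (R : realType) (k : nat) (L : 'I_k -> 'I_k -> R) (a g : 'I_k)
  (g' b : 'I_k) : R :=
  rew R b g' * dlogpi L a g b g'.

Definition Ex (R : realType) (k : nat) (L : 'I_k -> 'I_k -> R) (X : 'I_k -> 'I_k -> R) : R :=
  \sum_(g' < k) \sum_(b < k) goal_p R g' * pol L b g' * X g' b.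

Definition MSE (R : realType) (k : nat) (L : 'I_k -> 'I_k -> R) (a g : 'I_k)
  (X : 'I_k -> 'I_k -> R) : R :=
  Ex L (fun g' b => (X g' b - Ex L (reinforce L a g)) ^+ 2).

Definition const_logits (R : realType) (k : nat) (L0 : R) : 'I_k -> 'I_k -> R :=
  fun _ _ => L0.

Definition snr_ratio (R : realType) (k : nat) (L0 : R) (a g : 'I_k) : R :=
  Num.sqrt (MSE (const_logits (k:=k) L0) a g (reinforce (const_logits (k:=k) L0) a g))
  / `| Ex (const_logits (k:=k) L0) (reinforce (const_logits (k:=k) L0) a g) |.

(* Main.v *)
Require Import Defs.
From HB Require Import structures.
From mathcomp Require Import all_boot all_order all_algebra.
From mathcomp Require Import all_classical all_reals all_analysis.
From mathcomp.algebra_tactics Require Import ring lra.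
Import Order.TTheory GRing.Theory Num.Theory.
Import numFieldNormedType.Exports.
Local Open Scope classical_set_scope.
Local Open Scope ring_scope.


Section S.
Variable R : realType.

Lemma is_derive_lnS (x C : R) : 0 <= C ->
  is_derive x 1 (fun t => ln (expR t + C)) ((expR x + C)^-1 * expR x).
Proof.
move=> C0.
have Sp : 0 < expR x + C by rewrite ltr_pwDl ?expR_gt0.
have dS : derivable (fun t : R => expR t + C) x 1.
  apply: ex_derive.
have dl : derivable (@ln R) (expR x + C) 1.
  by apply: ex_derive; apply: is_derive1_ln.
apply: DeriveDef.
  apply/derivable1_diffP; change (differentiable (@ln R \o (fun t : R => expR t + C)) x); apply: differentiable_comp.
    exact/derivable1_diffP.
  exact/derivable1_diffP.
rewrite -derive1E.
rewrite (derive1_comp (f := fun t : R => expR t + C) (g := @ln R)) //.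
rewrite !derive1E.
have [_ ->] := is_derive1_ln Sp.
by rewrite derive_val addr0.
Qed.


Lemma sumS n (a : 'I_n.+1) (t L0 : R) :
  \sum_(c < n.+1) expR (if c == a then t else L0) = expR t + n%:R * expR L0.
Proof.
rewrite (bigD1 a) //= eqxx; congr (_ + _).
rewrite (eq_bigr (fun _ => expR L0)); last by move=> c /negbTE ->.
by rewrite sumr_const cardC1 card_ord /= mulr_natl.
Qed.

Lemma dlogpi_const n (L0 : R) (a g b g' : 'I_n.+1) :
  dlogpi (const_logits L0) a g b g' = (g' == g)%:R * ((b == a)%:R - (n.+1)%:R^-1).
Proof.
rewrite /dlogpi.
have [eg|ng] := eqVneq g' g; last first.
  rewrite mul0r.
  have -> : (fun t => ln (pol (upd (const_logits L0) a g t) b g')) =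
            cst (ln (pol (const_logits L0) b g')).
    by apply: funext => t; rewrite /pol /upd (negbTE ng) !andbF; under eq_bigr do rewrite andbF.
  by rewrite derive1_cst.
subst g'; rewrite mul1r.
have -> : (fun t => ln (pol (upd (const_logits L0) a g t) b g)) =
  (fun t => (if b == a then t else L0) - ln (expR t + n%:R * expR L0)).
  apply: funext => t; rewrite /pol /upd eqxx andbT.
  under eq_bigr do rewrite andbT.
  rewrite /const_logits sumS ln_div ?posrE ?expR_gt0 ?ltr_pwDl ?mulr_ge0 ?expR_ge0 //.
  by rewrite expRK.
  exact: expR_gt0.
have C0 : 0 <= n%:R * expR L0 :> R by rewrite mulr_ge0 ?expR_ge0.
have hl := @is_derive_lnS L0 _ C0.
rewrite /const_logits derive1E.
have E : expR L0 + n%:R * expR L0 = (n.+1)%:R * expR L0 by rewrite mulrSr mulrDl mul1r addrC.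
case: (b == a).
  rewrite derive_val E.
  by rewrite invfM mulrAC mulfK ?gt_eqF ?expR_gt0.
have h2 : is_derive L0 (1:R) (fun t : R => L0 - ln (expR t + n%:R * expR L0))
   (0 - (expR L0 + n%:R * expR L0)^-1 * expR L0).
  exact: (is_deriveB (f := cst L0)).
rewrite derive_val E.
by rewrite invfM mulrAC mulfK ?gt_eqF ?expR_gt0 // sub0r.
Qed.
End S.



Lemma alg (R : fieldType) n (c : R) : (n.+1%:R : R) != 0 ->
  (n.+1%:R : R)^-2 * ((c - (n.+1%:R : R)^-2*c)^+2 - ((n.+1%:R : R)^-2 * c)^+2 + ((n.+1%:R : R)^-2 * c)^+2 *+ n.+1 *+ n.+1) = ((n.+1%:R : R)^-2)^+2 * c^+2 * ((n.+1%:R : R)^+2 - 1).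
Proof. move=> k0. field. by rewrite addrC natr1. Qed.

Section S2.
Variable R : realType.

Lemma pol_const n (L0 : R) (b g : 'I_n.+1) : pol (const_logits L0) b g = (n.+1)%:R^-1.
Proof.
rewrite /pol /const_logits sumr_const card_ord -[expR L0 *+ _]mulr_natr invfM mulrA mulfV ?gt_eqF ?expR_gt0 // mul1r.
by []. Qed.

Lemma sum2_single n (F : 'I_n.+1 -> 'I_n.+1 -> R) g :
  (forall g' b, (g' != g) || (b != g) -> F g' b = 0) ->
  \sum_(g' < n.+1) \sum_(b < n.+1) F g' b = F g g.
Proof.
move=> H; rewrite (bigD1 g) //= [X in _ + X]big1 ?addr0; last first.
  by move=> g' ng; apply: big1 => b _; apply: H; rewrite ng.
rewrite (bigD1 g) //= [X in _ + X]big1 ?addr0 // => b nb; apply: H; rewrite nb orbT.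
by []. Qed.

Lemma Ex_const n (L0 : R) (X : 'I_n.+1 -> 'I_n.+1 -> R) :
  Ex (const_logits L0) X = (n.+1)%:R^-2 * \sum_(g' < n.+1) \sum_(b < n.+1) X g' b.
Proof.
rewrite /Ex mulr_sumr; apply: eq_bigr => g' _; rewrite mulr_sumr; apply: eq_bigr => b _.
by rewrite pol_const /goal_p -exprVn expr2.
Qed.

Lemma reinforce_const n (L0 : R) (a g g' b : 'I_n.+1) :
  reinforce (const_logits L0) a g g' b =
  (b == g')%:R * ((g' == g)%:R * ((b == a)%:R - (n.+1)%:R^-1)).
Proof. by rewrite /reinforce /rew dlogpi_const. Qed.

Definition cc {n} (a g : 'I_n.+1) : R := (g == a)%:R - (n.+1)%:R^-1.

Lemma E_const n (L0 : R) (a g : 'I_n.+1) :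
  Ex (const_logits L0) (reinforce (const_logits L0) a g) = (n.+1)%:R^-2 * cc a g.
Proof.
rewrite Ex_const (@sum2_single _ _ g).
  by rewrite reinforce_const !eqxx !mul1r.
move=> g' b /orP[] H; rewrite reinforce_const.
  by rewrite (negbTE H) mul0r mulr0.
have [Eb|nb] := eqVneq b g'; first by rewrite -Eb (negbTE H) mul0r mulr0.
by rewrite mul0r.
Qed.

Lemma MSE_const n (L0 : R) (a g : 'I_n.+1) :
  MSE (const_logits L0) a g (reinforce (const_logits L0) a g) =
  ((n.+1)%:R^-2 * `|cc a g|) ^+ 2 * ((n.+1)%:R ^+ 2 - 1).
Proof.
rewrite /MSE E_const Ex_const.
set E := (n.+1)%:R^-2 * cc a g.
set k : R := (n.+1)%:R.
have -> : \sum_(g' < n.+1) \sum_(b < n.+1) (reinforce (const_logits L0) a g g' b - E) ^+ 2 =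
   \sum_(g' < n.+1) \sum_(b < n.+1) (((reinforce (const_logits L0) a g g' b - E) ^+ 2 - E ^+ 2) + E ^+ 2).
  by apply: eq_bigr => g' _; apply: eq_bigr => b _; rewrite subrK.
under eq_bigr do rewrite big_split /= sumr_const card_ord.
rewrite big_split /= sumr_const card_ord.
rewrite (@sum2_single _ _ g); last first.
  move=> g' b /orP[] H; rewrite reinforce_const.
    by rewrite (negbTE H) mul0r mulr0 sub0r sqrrN subrr.
  have [Eb|Hb] := eqVneq b g'; first by rewrite -Eb (negbTE H) mul0r mulr0 sub0r sqrrN subrr.
  by rewrite mul0r sub0r sqrrN subrr.
rewrite reinforce_const !eqxx !mul1r -/(cc a g).
rewrite /E -/k.
have k0 : k != 0 by rewrite /k pnatr_eq0.
rewrite [in RHS]exprMn real_normK ?num_real // /k.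
exact: alg.
Qed.
End S2.



Section S4.
Variable R : realType.

Lemma cc_neq0 n (a g : 'I_n.+1) : (0 < n)%N -> cc R a g != 0.
Proof.
move=> n0; rewrite /cc; case: (g == a).
  by rewrite subr_eq0 eq_sym invr_eq1 pnatr_eq1 -lt0n.
by rewrite sub0r oppr_eq0 invr_eq0 pnatr_eq0.
Qed.

Lemma ratio_eq n (L0 : R) (a g : 'I_n.+1) : (0 < n)%N ->
  snr_ratio L0 a g = Num.sqrt ((n.+1)%:R ^+ 2 - 1).
Proof.
move=> n0; rewrite /snr_ratio MSE_const E_const.
have kp : 0 < (n.+1)%:R ^- 2 :> R by rewrite invr_gt0 exprn_gt0 ?ltr0n.
rewrite sqrtrM ?sqr_ge0 // sqrtr_sqr normrM normr_id (gtr0_norm kp).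
have x0 : (n.+1)%:R ^- 2 * `|cc R a g| != 0.
  apply: mulf_neq0; first by rewrite gt_eqF.
  by rewrite normr_eq0 cc_neq0.
by rewrite normrM (gtr0_norm kp) mulrAC mulfV // mul1r.
Qed.
End S4.

Theorem theorem1 (R : realType) (L0 : R) (a g : forall n : nat, 'I_n.+1) :
  (fun n : nat => snr_ratio L0 (a n) (g n) / (n.+1)%:R) @ \oo --> (1 : R).
Proof.
apply: (@squeeze_cvgr _ _ _ _ (fun n => 1 - (n.+1%:R : R)^-1) (cst 1)).
- exists 1%N => // n /= Hn.
  rewrite ratio_eq //.
  have k1 : 1 <= n.+1%:R :> R by rewrite ler1n.
  move: k1; set k : R := n.+1%:R; clearbody k => k1.
  have kp : 0 < k by lra.
  apply/andP; split.
    have hs : k - 1 <= Num.sqrt (k ^+ 2 - 1).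
      rewrite -[k - 1]ger0_norm ?subr_ge0 // -sqrtr_sqr; apply: ler_wsqrtr; nra.
    have kn0 : k != 0 by rewrite gt_eqF.
    have -> : 1 - k^-1 = (k - 1) / k by field.
    by rewrite ler_pM2r ?invr_gt0.
  apply: (@le_trans _ _ (k / k)); last by rewrite mulfV ?gt_eqF.
  rewrite ler_pM2r ?invr_gt0 //.
  rewrite -[X in _ <= X]ger0_norm ?ltW // -sqrtr_sqr.
  rewrite ltr_sqrt ?exprn_gt0 //; lra.
- have := cvgB (cvg_cst (1:R)) (@cvg_harmonic R); rewrite subr0; apply.
- exact: cvg_cst.
Qed.
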